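(* Let $\mathfrak X^n=(X^n,d^n,\mu^n,\eta^n)$, $n\in\mathbb N$, and $\mathfrak X=(X,d,\mu,\eta)$ be elements of $\mathbb M^{GHPU}$. Then $\mathfrak X^n\to\mathfrak X$ in the GHPU metric if and only if there exist a compact metric space $(W,D)$ and isometric embeddings $X\to W$ and $X^n\to W$, $n\in\mathbb N$, such that, identifying $X$ and $X^n$ with their images, $X^n\to X$ in the $D$-Hausdorff metric, $\mu^n\to\mu$ in the $D$-Prokhorov metric, and $\sup_{t\in\mathbb R}D(\eta^n(t),\eta(t))\to0$.
   Context: $\mathbb M^{GHPU}$ is the set of $(X,d,\mu,\eta)$ with $(X,d)$ compact metric, $\mu$ a finite Borel measure on $X$, $\eta:\mathbb R\to X$ continuous such that for each $\epsilon>0$ there is $T>0$ with $d(\eta(t),\eta(T))\le\epsilon$ and $d(\eta(-t),\eta(-T))\le\epsilon$ for $t\ge T$. The GHPU metric $\mathbb d^{GHPU}(\mathfrak X_1,\mathfrak X_2)$ is the infimum over compact metric spaces $(W,D)$ and isometric embeddings $\iota_i:X_i\to W$ of $\mathbb d^H_D(\iota_1(X_1),\iota_2(X_2))+\mathbb d^P_D((\iota_1)_*\mu_1,(\iota_2)_*\mu_2)+\sup_{t}D(\iota_1\eta_1(t),\iota_2\eta_2(t))$ (Hausdorff and Prokhorov distances). *)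

(* Defs.v *)
From Stdlib Require Import Reals.
From Coquelicot Require Import Coquelicot.
Open Scope R_scope.

Record MetricSpace := {
  carrier :> Type;
  dist : carrier -> carrier -> R;
  dist_refl : forall x, dist x x = 0;
  dist_eq0 : forall x y, dist x y = 0 -> x = y;
  dist_sym : forall x y, dist x y = dist y x;
  dist_tri : forall x y z, dist x z <= dist x y + dist y z
}.
Arguments dist {m}.

Definition is_open {X : MetricSpace} (U : X -> Prop) : Prop :=
  forall x, U x -> exists r, 0 < r /\ forall y, dist x y < r -> U y.

Definition compact_space (X : MetricSpace) : Prop :=
  forall (I : Type) (U : I -> X -> Prop),
    (forall i, is_open (U i)) -> (forall x, exists i, U i x) ->
    exists l : list I, forall x, exists i, List.In i l /\ U i x.

Definition sigma_algebra {X : Type} (S : (X -> Prop) -> Prop) : Prop :=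
  S (fun _ => False) /\
  (forall A, S A -> S (fun x => ~ A x)) /\
  (forall A : nat -> X -> Prop, (forall n, S (A n)) -> S (fun x => exists n, A n x)).

Definition borel {X : MetricSpace} (A : X -> Prop) : Prop :=
  forall S : (X -> Prop) -> Prop, sigma_algebra S -> (forall U, is_open U -> S U) -> S A.

(** a finite (real-valued) Borel measure; its values off Borel sets are irrelevant *)
Definition finite_borel_measure {X : MetricSpace} (mu : (X -> Prop) -> R) : Prop :=
  mu (fun _ => False) = 0 /\
  (forall A, borel A -> 0 <= mu A) /\
  (forall A : nat -> X -> Prop, (forall n, borel (A n)) ->
     (forall i j, i <> j -> forall x, A i x -> A j x -> False) ->
     is_series (fun n => mu (A n)) (mu (fun x => exists n, A n x))).

Definition continuous_curve {X : MetricSpace} (eta : R -> X) : Prop :=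
  forall t eps, 0 < eps -> exists delta, 0 < delta /\
    forall s, Rabs (s - t) < delta -> dist (eta s) (eta t) < eps.

Definition tail_condition {X : MetricSpace} (eta : R -> X) : Prop :=
  forall eps, 0 < eps -> exists T, 0 < T /\ forall t, T <= t ->
    dist (eta t) (eta T) <= eps /\ dist (eta (- t)) (eta (- T)) <= eps.

Record GHPU := {
  gspace : MetricSpace;
  gcompact : compact_space gspace;
  gmu : (gspace -> Prop) -> R;
  gmu_meas : finite_borel_measure gmu;
  geta : R -> gspace;
  geta_cont : continuous_curve geta;
  geta_tail : tail_condition geta
}.

Definition isometric_embedding {X W : MetricSpace} (i : X -> W) : Prop :=
  forall x y, dist (i x) (i y) = dist x y.

Definition nbhd {W : MetricSpace} (A : W -> Prop) (e : R) : W -> Prop :=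
  fun w => exists a, A a /\ dist w a < e.

Definition hausdorff_dist {W : MetricSpace} (A B : W -> Prop) : Rbar :=
  Glb_Rbar (fun e => 0 < e /\
    (forall a, A a -> nbhd B e a) /\ (forall b, B b -> nbhd A e b)).

Definition prokhorov_dist {W : MetricSpace} (mu nu : (W -> Prop) -> R) : Rbar :=
  Glb_Rbar (fun e => 0 < e /\ forall A, borel A ->
    mu A <= nu (nbhd A e) + e /\ nu A <= mu (nbhd A e) + e).

Definition pushforward {X W : MetricSpace} (i : X -> W) (mu : (X -> Prop) -> R)
  : (W -> Prop) -> R := fun B => mu (fun x => B (i x)).

Definition image {X W : MetricSpace} (i : X -> W) : W -> Prop :=
  fun w => exists x, i x = w.

Definition sup_curve_dist {W : MetricSpace} (g1 g2 : R -> W) : Rbar :=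
  Lub_Rbar (fun r => exists t, r = dist (g1 t) (g2 t)).

Definition ghpu_dist (X1 X2 : GHPU) : Rbar :=
  Glb_Rbar (fun r => exists (W : MetricSpace) (i1 : gspace X1 -> W) (i2 : gspace X2 -> W),
    compact_space W /\ isometric_embedding i1 /\ isometric_embedding i2 /\
    Rbar_plus (Rbar_plus (hausdorff_dist (image i1) (image i2))
                         (prokhorov_dist (pushforward i1 (gmu X1)) (pushforward i2 (gmu X2))))
              (sup_curve_dist (fun t => i1 (geta X1 t)) (fun t => i2 (geta X2 t)))
    = Finite r).

Definition Rbar_cv0 (u : nat -> Rbar) : Prop :=
  forall eps, 0 < eps -> exists N, forall n, (N <= n)%nat -> Rbar_lt (Rbar_abs (u n)) (Finite eps).

(* Main.v *)
Require Import Defs.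
From Stdlib Require Import Reals.
From Coquelicot Require Import Coquelicot.
From Stdlib Require Import Lra Lia Classical FunctionalExtensionality PropExtensionality List ClassicalEpsilon.
Require Import Defs.
Open Scope R_scope.

Lemma pred_ext {T : Type} (P Q : T -> Prop) : (forall x, P x <-> Q x) -> P = Q.
Proof. intros H; apply functional_extensionality; intros x; apply propositional_extensionality; auto. Qed.

Lemma glb_fin (E : R -> Prop) e0 : E e0 -> (forall e, E e -> 0 <= e) ->
  exists g, Glb_Rbar E = Finite g /\ 0 <= g <= e0.
Proof.
  intros He0 Hpos. destruct (Glb_Rbar_correct E) as [Hlb Hgl].
  assert (H1 : Rbar_le (Finite 0) (Glb_Rbar E)) by (apply Hgl; intros x Hx; simpl; auto).
  assert (H2 := Hlb e0 He0).
  destruct (Glb_Rbar E) as [g| |]; simpl in *; try tauto.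
  exists g; auto.
Qed.

Lemma glb_nonneg (E : R -> Prop) : (forall e, E e -> 0 <= e) -> Rbar_le (Finite 0) (Glb_Rbar E).
Proof.
  intros Hpos. destruct (Glb_Rbar_correct E) as [Hlb Hgl]. apply Hgl; intros x Hx; simpl; auto.
Qed.

Lemma glb_lt (E : R -> Prop) g e : Glb_Rbar E = Finite g -> g < e -> exists e', E e' /\ e' < e.
Proof.
  intros Hg Hlt. apply NNPP; intros Hn.
  destruct (Glb_Rbar_correct E) as [Hlb Hgl].
  assert (Rbar_le (Finite e) (Glb_Rbar E)).
  { apply Hgl; intros x Hx; simpl. destruct (Rle_dec e x); auto. exfalso; apply Hn; exists x; split; auto; lra. }
  rewrite Hg in H; simpl in H; lra.
Qed.

Lemma lub_le (E : R -> Prop) c : (forall x, E x -> x <= c) -> Rbar_le (Lub_Rbar E) (Finite c).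
Proof. intros H. destruct (Lub_Rbar_correct E) as [Hub Hl]. apply Hl. intros x Hx; simpl; auto. Qed.

Lemma lub_ge (E : R -> Prop) x : E x -> Rbar_le (Finite x) (Lub_Rbar E).
Proof. intros H. destruct (Lub_Rbar_correct E) as [Hub Hl]. apply Hub; auto. Qed.

Lemma rbar_small (u : Rbar) c eps : Rbar_le (Finite 0) u -> Rbar_le u (Finite c) -> c < eps ->
  Rbar_lt (Rbar_abs u) (Finite eps).
Proof.
  destruct u as [r| |]; simpl; try tauto. intros; rewrite Rabs_pos_eq; lra.
Qed.

Lemma rbar_small_inv (u : Rbar) eps : Rbar_le (Finite 0) u -> Rbar_lt (Rbar_abs u) (Finite eps) ->
  exists r, u = Finite r /\ 0 <= r < eps.
Proof.
  destruct u as [r| |]; simpl; try tauto. intros H1 H2; rewrite Rabs_pos_eq in H2 by lra; exists r; auto.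
Qed.

Lemma open_borel {X : MetricSpace} (U : X -> Prop) : is_open U -> borel U.
Proof. intros H S _ HS; auto. Qed.

Lemma borel_diff {X : MetricSpace} (A B : X -> Prop) : borel A -> borel B ->
  borel (fun x => B x /\ ~ A x).
Proof.
  intros HA HB S HS Ho. pose proof HS as HS'. unfold sigma_algebra in HS'. destruct HS' as [H0 [Hc Hu]].
  assert (Hseq : S (fun x => exists n, (fun k (x : X) => match k with O => ~ B x | _ => A x end) n x)).
  { apply Hu. intros [|k]; [apply Hc; apply HB; [exact HS|exact Ho] | apply HA; [exact HS|exact Ho]]. }
  apply Hc in Hseq.
  replace (fun x => B x /\ ~ A x) with
    (fun x => ~ (exists n, (fun k (x : X) => match k with O => ~ B x | _ => A x end) n x)); auto.
  apply pred_ext; intros x; split.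
  - intros H. split.
    + apply NNPP; intros nb; apply H; exists O; auto.
    + intros a; apply H; exists 1%nat; auto.
  - intros [b na] [[|k] Hk]; auto.
Qed.

Lemma series_two (a : nat -> R) l : is_series a l -> (forall k, (2 <= k)%nat -> a k = 0) -> l = a O + a 1%nat.
Proof.
  intros Hs Hz. apply is_series_unique in Hs. rewrite <- Hs. apply is_series_unique.
  unfold is_series. apply (filterlim_ext_loc (fun _ : nat => a O + a 1%nat)); [| apply filterlim_const].
  exists 1%nat. intros n Hn. induction n as [|n IH]; [lia|].
  destruct n as [|n].
  - rewrite sum_Sn, sum_O. reflexivity.
  - rewrite sum_Sn. rewrite <- IH. 2: lia. rewrite (Hz (S (S n))). 2: lia. unfold plus; simpl. change (a 0%nat + a 1%nat = a 0%nat + a 1%nat + 0)%R. ring.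
Qed.

Lemma mu_mono {X : MetricSpace} (mu : (X -> Prop) -> R) (A B : X -> Prop) :
  finite_borel_measure mu -> borel A -> borel B -> (forall x, A x -> B x) -> mu A <= mu B.
Proof.
  intros [H0 [Hp Hs]] HA HB Hsub.
  set (C := fun k (x : X) => match k with O => A x | 1%nat => B x /\ ~ A x | _ => False end).
  assert (HC : forall n, borel (C n)).
  { intros [|[|k]]; unfold C; simpl; auto. apply borel_diff; auto. intros S HS _; apply HS. }
  assert (Hd : forall i j, i <> j -> forall x, C i x -> C j x -> False).
  { intros [|[|i]] [|[|j]] Hij x; unfold C; simpl; try tauto; lia. }
  specialize (Hs C HC Hd).
  replace (fun x => exists n, C n x) with B in Hs.
  2:{ apply pred_ext; intros x; split.
      - intros Hb. destruct (classic (A x)); [exists O | exists 1%nat]; unfold C; simpl; auto.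
      - intros [[|[|k]] Hk]; unfold C in Hk; simpl in Hk; [apply Hsub; auto | tauto | tauto]. }
  apply series_two in Hs.
  2:{ intros [|[|k]] Hk; try lia. unfold C; simpl. exact H0. }
  unfold C in Hs; simpl in Hs. rewrite Hs. assert (0 <= mu (fun x => B x /\ ~ A x)) by (apply Hp; apply borel_diff; auto). change (mu A <= mu A + mu (fun x => B x /\ ~ A x)). lra.
Qed.

Lemma nbhd_open {W : MetricSpace} (A : W -> Prop) e : is_open (nbhd A e).
Proof.
  intros w [a [Ha Hd]]. exists (e - dist w a). split; [lra|].
  intros y Hy. exists a; split; auto. pose proof (dist_tri _ y w a). pose proof (dist_sym _ y w). lra.
Qed.

Lemma preimage_open {X W : MetricSpace} (f : X -> W) (U : W -> Prop) :
  (forall x y, dist (f x) (f y) <= dist x y) -> is_open U -> is_open (fun x => U (f x)).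
Proof.
  intros Hf HU x Hx. destruct (HU _ Hx) as [r [Hr H]]. exists r; split; auto.
  intros y Hy. apply H. specialize (Hf x y). lra.
Qed.

Lemma preimage_borel {X W : MetricSpace} (f : X -> W) (A : W -> Prop) :
  (forall x y, dist (f x) (f y) <= dist x y) -> borel A -> borel (fun x => A (f x)).
Proof.
  intros Hf HA S HS Ho.
  apply (HA (fun B => S (fun x => B (f x)))).
  - unfold sigma_algebra in HS |- *. destruct HS as [H0 [Hc Hu]]. split; [exact H0| split].
    + intros B HB. exact (Hc _ HB).
    + intros B HB. exact (Hu (fun n x => B n (f x)) HB).
  - intros U HU. apply Ho. apply preimage_open; auto.
Qed.

Lemma dist_nonneg {X : MetricSpace} (x y : X) : 0 <= dist x y.
Proof. pose proof (dist_tri _ x y x). rewrite dist_refl, (dist_sym _ y x) in H. lra. Qed.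

Section Glue.
Variables (Y : nat -> MetricSpace) (Z : MetricSpace) (z0 : Z) (δ : forall n, Y n -> Z -> R) (c : nat -> R).
Hypothesis Hc_pos : forall n, 0 < c n.
Hypothesis Hlow : forall n x y, c n <= δ n x y.
Hypothesis H1 : forall n x x' y, δ n x y <= dist x x' + δ n x' y.
Hypothesis H2 : forall n x y y', δ n x y <= δ n x y' + dist y' y.
Hypothesis H3 : forall n x x' y, dist x x' <= δ n x y + δ n x' y.
Hypothesis H4 : forall n x y y', dist y y' <= δ n x y + δ n x y'.

Definition infZ (f : Z -> R) : R := real (Glb_Rbar (fun r => exists y, r = f y)).

Lemma infZ_spec (f : Z -> R) L : (forall y, L <= f y) ->
  (forall y, infZ f <= f y) /\ L <= infZ f /\ (forall b, (forall y, b <= f y) -> b <= infZ f).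
Proof.
  intros HL. unfold infZ. destruct (Glb_Rbar_correct (fun r => exists y, r = f y)) as [Hlb Hgl].
  assert (HA : Rbar_le (Finite L) (Glb_Rbar (fun r => exists y, r = f y))).
  { apply Hgl. intros x [y ->]; simpl; auto. }
  assert (HB : Rbar_le (Glb_Rbar (fun r => exists y, r = f y)) (Finite (f z0))).
  { apply Hlb. exists z0; auto. }
  assert (Hb : forall b, (forall y, b <= f y) -> Rbar_le (Finite b) (Glb_Rbar (fun r => exists y, r = f y))).
  { intros b Hb. apply Hgl. intros x [y ->]; simpl; auto. }
  destruct (Glb_Rbar (fun r => exists y, r = f y)) as [g| |]; simpl in *; try tauto.
  split; [|split]; auto.
  intros y. specialize (Hlb (f y) (ex_intro _ y eq_refl)). simpl in Hlb. auto.
Qed.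

Lemma dnn {X : MetricSpace} (x y : X) : 0 <= dist x y.
Proof. apply dist_nonneg. Qed.

Lemma δ_nn n x y : 0 <= δ n x y.
Proof. pose proof (Hlow n x y); pose proof (Hc_pos n); lra. Qed.

Lemma inf_le n m x z y : infZ (fun y => δ n x y + δ m z y) <= δ n x y + δ m z y.
Proof.
  destruct (infZ_spec (fun y => δ n x y + δ m z y) 0) as [Ha _].
  - intros y'; pose proof (δ_nn n x y'); pose proof (δ_nn m z y'); lra.
  - apply Ha.
Qed.

Lemma inf_ge n m x z b : (forall y, b <= δ n x y + δ m z y) -> b <= infZ (fun y => δ n x y + δ m z y).
Proof.
  intros Hb. destruct (infZ_spec (fun y => δ n x y + δ m z y) 0) as [_ [_ Hc]].
  - intros y'; pose proof (δ_nn n x y'); pose proof (δ_nn m z y'); lra.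
  - apply Hc; auto.
Qed.

Lemma inf_two n m k l x z u v b :
  (forall y y', b <= δ n x y + δ m z y + (δ k u y' + δ l v y')) ->
  b <= infZ (fun y => δ n x y + δ m z y) + infZ (fun y => δ k u y + δ l v y).
Proof.
  intros H.
  assert (forall y', b - (δ k u y' + δ l v y') <= infZ (fun y => δ n x y + δ m z y)).
  { intros y'. apply inf_ge. intros y. specialize (H y y'). lra. }
  assert (b - infZ (fun y => δ n x y + δ m z y) <= infZ (fun y => δ k u y + δ l v y)).
  { apply inf_ge. intros y'. specialize (H0 y'). lra. }
  lra.
Qed.

Definition dd n m (x : Y n) (z : Y m) : R :=
  match Nat.eq_dec n m with
  | left e => dist (eq_rect n (fun k => Y k) x m e) z
  | right _ => infZ (fun y => δ n x y + δ m z y)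
  end.

Lemma dd_same n (x z : Y n) : dd n n x z = dist x z.
Proof.
  unfold dd. destruct (Nat.eq_dec n n) as [e|e]; [|congruence].
  rewrite (Eqdep_dec.UIP_dec Nat.eq_dec e eq_refl). reflexivity.
Qed.

Lemma dd_diff n m (x : Y n) (z : Y m) : n <> m -> dd n m x z = infZ (fun y => δ n x y + δ m z y).
Proof. intros H. unfold dd. destruct (Nat.eq_dec n m); [congruence|reflexivity]. Qed.

Lemma dd_sym n m (x : Y n) (z : Y m) : dd n m x z = dd m n z x.
Proof.
  destruct (Nat.eq_dec n m) as [<-|nm].
  - rewrite !dd_same. apply dist_sym.
  - rewrite !dd_diff by auto. f_equal. apply functional_extensionality; intros; ring.
Qed.

Lemma dd_tri n m k (x : Y n) (z : Y m) (w : Y k) : dd n k x w <= dd n m x z + dd m k z w.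
Proof.
  destruct (Nat.eq_dec n m) as [<-|nm].
  - rewrite dd_same. destruct (Nat.eq_dec n k) as [<-|nk].
    + rewrite !dd_same. apply dist_tri.
    + rewrite !dd_diff by auto.
      assert (infZ (fun y => δ n x y + δ k w y) - dist x z <= infZ (fun y => δ n z y + δ k w y)).
      { apply inf_ge. intros y. pose proof (inf_le n k x w y). pose proof (H1 n x z y). lra. }
      lra.
  - rewrite (dd_diff n m) by auto. destruct (Nat.eq_dec m k) as [<-|mk].
    + rewrite dd_same, dd_diff by auto.
      assert (infZ (fun y => δ n x y + δ m w y) - dist z w <= infZ (fun y => δ n x y + δ m z y)).
      { apply inf_ge. intros y. pose proof (inf_le n m x w y). pose proof (H1 m w z y).
        pose proof (dist_sym _ z w). lra. }
      lra.
    + rewrite (dd_diff m k) by auto. destruct (Nat.eq_dec n k) as [<-|nk].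
      * rewrite dd_same. apply inf_two. intros y y'.
        pose proof (H3 n x w y). pose proof (H2 n w y y'). pose proof (H4 m z y' y). lra.
      * rewrite dd_diff by auto. apply inf_two. intros y y'.
        pose proof (inf_le n k x w y). pose proof (H2 k w y y'). pose proof (H4 m z y' y). lra.
Qed.

Lemma LRR n m (x : Y n) (z : Y m) y : δ m z y <= δ n x y + dd n m x z.
Proof.
  destruct (Nat.eq_dec n m) as [<-|nm].
  - rewrite dd_same. pose proof (H1 n z x y). pose proof (dist_sym _ z x). lra.
  - rewrite dd_diff by auto.
    assert (δ m z y - δ n x y <= infZ (fun y => δ n x y + δ m z y)).
    { apply inf_ge. intros y'. pose proof (H2 m z y y'). pose proof (H4 n x y' y). lra. }
    lra.
Qed.

Lemma RLR n m (x : Y n) (z : Y m) y : dd n m x z <= δ n x y + δ m z y.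
Proof.
  destruct (Nat.eq_dec n m) as [<-|nm].
  - rewrite dd_same. apply H3.
  - rewrite dd_diff by auto. apply inf_le.
Qed.

Definition Wt := (Z + {n : nat & Y n})%type.

Definition Wd (a b : Wt) : R :=
  match a, b with
  | inl y, inl y' => dist y y'
  | inl y, inr (existT n x) => δ n x y
  | inr (existT n x), inl y => δ n x y
  | inr (existT n x), inr (existT m z) => dd n m x z
  end.

Lemma Wd_refl a : Wd a a = 0.
Proof. destruct a as [y|[n x]]; simpl. apply dist_refl. rewrite dd_same; apply dist_refl. Qed.

Lemma Wd_sym a b : Wd a b = Wd b a.
Proof. destruct a as [y|[n x]], b as [y'|[m z]]; simpl; auto. apply dist_sym. apply dd_sym. Qed.

Lemma Wd_eq0 a b : Wd a b = 0 -> a = b.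
Proof.
  destruct a as [y|[n x]], b as [y'|[m z]]; simpl; intros H.
  - f_equal; apply dist_eq0; auto.
  - pose proof (Hlow m z y); pose proof (Hc_pos m); lra.
  - pose proof (Hlow n x y'); pose proof (Hc_pos n); lra.
  - destruct (Nat.eq_dec n m) as [<-|nm].
    + rewrite dd_same in H. apply dist_eq0 in H. subst; auto.
    + rewrite dd_diff in H by auto. exfalso.
      assert (c n + c m <= infZ (fun y => δ n x y + δ m z y)).
      { apply inf_ge. intros y. pose proof (Hlow n x y); pose proof (Hlow m z y); lra. }
      pose proof (Hc_pos n); pose proof (Hc_pos m); lra.
Qed.

Lemma Wd_tri a b d : Wd a d <= Wd a b + Wd b d.
Proof.
  destruct a as [y1|[n x]], b as [y2|[m z]], d as [y3|[k w]]; simpl.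
  - apply dist_tri.
  - pose proof (H2 k w y1 y2). pose proof (dist_sym _ y1 y2). lra.
  - apply H4.
  - apply LRR.
  - apply H2.
  - apply RLR.
  - rewrite dd_sym. pose proof (LRR m n z x y3). lra.
  - apply dd_tri.
Qed.

Definition Wm : MetricSpace := Build_MetricSpace Wt Wd Wd_refl Wd_eq0 Wd_sym Wd_tri.


Hypothesis HZ : compact_space Z.
Hypothesis HY : forall n, compact_space (Y n).
Hypothesis Hcl : forall rho, 0 < rho -> exists N, forall n, (N <= n)%nat -> forall x : Y n, exists y, δ n x y < rho.

Lemma list_min {J : Type} (f : J -> R) (l : list J) :
  exists rho, 0 < rho /\ forall p, In p l -> 0 < f p -> rho <= f p / 2.
Proof.
  induction l as [|p l [r [Hr IH]]].
  - exists 1; split; [lra|]. intros p [].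
  - destruct (Rlt_dec 0 (f p)) as [Hp|Hp].
    + exists (Rmin r (f p / 2)). split. apply Rmin_pos; lra.
      intros q [<-|Hq] Hq'. apply Rmin_r. pose proof (IH q Hq Hq'). pose proof (Rmin_l r (f p / 2)). lra.
    + exists r; split; auto. intros q [<-|Hq] Hq'; [lra|auto].
Qed.

Lemma Wm_compact : compact_space Wm.
Proof.
  intros I U HUo Hcov.
  assert (S1 : forall y : Z, exists i r, 0 < r /\ forall w, Wd (inl y) w < r -> U i w).
  { intros y. destruct (Hcov (inl y)) as [i Hi]. destruct (HUo i _ Hi) as [r [Hr Hb]].
    exists i, r; split; auto. }
  set (V := fun (p : I * R * Z) (y : Z) => match p with (i, r, y0) =>
              (0 < r /\ forall w, Wd (inl y0) w < r -> U i w) /\ dist y0 y < r / 2 end).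
  assert (Vo : forall p, is_open (V p)).
  { intros [[i r] y0] y [[Hr Hb] Hd]. exists (r / 2 - dist y0 y). split; [lra|].
    intros y' Hy'. split; [auto|]. pose proof (dist_tri _ y0 y y'). lra. }
  assert (Vc : forall y, exists p, V p y).
  { intros y. destruct (S1 y) as (i & r & Hr & Hb). exists (i, r, y). simpl. split; auto.
    rewrite dist_refl; lra. }
  destruct (HZ _ V Vo Vc) as [l Hl].
  destruct (list_min (fun p : I * R * Z => snd (fst p)) l) as [rho [Hrho Hmin]].
  assert (C0 : forall w, (exists y, Wd (inl y) w < rho) ->
             exists i, In i (map (fun p : I * R * Z => fst (fst p)) l) /\ U i w).
  { intros w [y Hy]. destruct (Hl y) as [[[i r] y0] [Hin Hv]]. simpl in Hv.
    destruct Hv as [[Hr Hb] Hd]. exists i. split.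
    - apply (in_map (fun p : I * R * Z => fst (fst p))) in Hin. exact Hin.
    - apply Hb. change (Wd (inl y0) w < r). pose proof (Wd_tri (inl y0) (inl y) w) as Ht. change (Wd (inl y0) (inl y)) with (dist y0 y) in Ht.
      pose proof (Hmin _ Hin Hr) as Hm. simpl in Hm. lra. }
  destruct (Hcl rho Hrho) as [N HN].
  assert (Hfin : forall N, exists l', forall n, (n < N)%nat -> forall x : Y n,
             exists i, In i l' /\ U i (inr (existT _ n x))).
  { induction N0 as [|N0 [l' IH]].
    - exists nil. intros; lia.
    - set (U' := fun i (x : Y N0) => U i (inr (existT _ N0 x))).
      assert (U'o : forall i, is_open (U' i)).
      { intros i. unfold U'. apply (preimage_open (W := Wm) (fun x : Y N0 => inr (existT _ N0 x))).
        - intros x x'. simpl. rewrite dd_same. lra.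
        - apply HUo. }
      assert (U'c : forall x, exists i, U' i x) by (intros x; apply Hcov).
      destruct (HY N0 I U' U'o U'c) as [l0 Hl0].
      exists (l0 ++ l'). intros n Hn x.
      destruct (Nat.eq_dec n N0) as [->|ne].
      + destruct (Hl0 x) as [i [Hi Hu]]. exists i. split; [apply in_or_app; auto | exact Hu].
      + destruct (IH n ltac:(lia) x) as [i [Hi Hu]]. exists i; split; [apply in_or_app; auto | exact Hu]. }
  destruct (Hfin N) as [l' Hl'].
  exists (map (fun p : I * R * Z => fst (fst p)) l ++ l'). intros [y|[n x]].
  - destruct (C0 (inl y)) as [i [Hi Hu]].
    + exists y. simpl. rewrite dist_refl; lra.
    + exists i; split; [apply in_or_app; auto | exact Hu].
  - destruct (Compare_dec.le_lt_dec N n) as [Hle|Hlt].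
    + destruct (HN n Hle x) as [y Hy]. destruct (C0 (inr (existT _ n x))) as [i [Hi Hu]].
      * exists y; simpl; auto.
      * exists i; split; [apply in_or_app; auto | exact Hu].
    + destruct (Hl' n Hlt x) as [i [Hi Hu]]. exists i; split; [apply in_or_app; auto | exact Hu].
Qed.

End Glue.

Lemma haus_nn {W : MetricSpace} (A B : W -> Prop) : Rbar_le (Finite 0) (hausdorff_dist A B).
Proof. apply glb_nonneg. intros e [He _]; lra. Qed.

Lemma prok_nn {W : MetricSpace} (m1 m2 : (W -> Prop) -> R) : Rbar_le (Finite 0) (prokhorov_dist m1 m2).
Proof. apply glb_nonneg. intros e [He _]; lra. Qed.

Lemma sup_nn {W : MetricSpace} (g1 g2 : R -> W) : Rbar_le (Finite 0) (sup_curve_dist g1 g2).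
Proof.
  unfold sup_curve_dist. eapply Rbar_le_trans; [| apply (lub_ge _ (dist (g1 0) (g2 0)))].
  - simpl. apply dist_nonneg.
  - exists 0; auto.
Qed.

Lemma sum3 (a b c : Rbar) r : Rbar_le (Finite 0) a -> Rbar_le (Finite 0) b -> Rbar_le (Finite 0) c ->
  Rbar_plus (Rbar_plus a b) c = Finite r ->
  exists x y z, a = Finite x /\ b = Finite y /\ c = Finite z /\ 0 <= x /\ 0 <= y /\ 0 <= z /\ r = x + y + z.
Proof.
  destruct a as [x| |], b as [y| |], c as [z| |]; simpl; try tauto; intros; try discriminate.
  injection H2; intros; subst. exists x, y, z; repeat split; auto.
Qed.

Lemma ghpu_elem_nn (X1 X2 : GHPU) : forall e,
  (fun r => exists (W : MetricSpace) (i1 : gspace X1 -> W) (i2 : gspace X2 -> W),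
    compact_space W /\ isometric_embedding i1 /\ isometric_embedding i2 /\
    Rbar_plus (Rbar_plus (hausdorff_dist (image i1) (image i2))
                         (prokhorov_dist (pushforward i1 (gmu X1)) (pushforward i2 (gmu X2))))
              (sup_curve_dist (fun t => i1 (geta X1 t)) (fun t => i2 (geta X2 t)))
    = Finite r) e -> 0 <= e.
Proof.
  intros e (W & i1 & i2 & _ & _ & _ & H).
  destruct (sum3 _ _ _ _ (haus_nn _ _) (prok_nn _ _) (sup_nn _ _) H) as (x & y & z & _ & _ & _ & ? & ? & ? & ->).
  lra.
Qed.

Lemma backward (Xn : nat -> GHPU) (X : GHPU) :
  (exists (W : MetricSpace) (i : gspace X -> W) (iN : forall n, gspace (Xn n) -> W),
    compact_space W /\ isometric_embedding i /\ (forall n, isometric_embedding (iN n)) /\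
    Rbar_cv0 (fun n => hausdorff_dist (image (iN n)) (image i)) /\
    Rbar_cv0 (fun n => prokhorov_dist (pushforward (iN n) (gmu (Xn n))) (pushforward i (gmu X))) /\
    Rbar_cv0 (fun n => sup_curve_dist (fun t => iN n (geta (Xn n) t)) (fun t => i (geta X t)))) ->
  Rbar_cv0 (fun n => ghpu_dist (Xn n) X).
Proof.
  intros (W & i & iN & HW & Hi & HiN & Hh & Hp & Hs) eps Heps.
  destruct (Hh (eps/4)) as [N1 HN1]; [lra|].
  destruct (Hp (eps/4)) as [N2 HN2]; [lra|].
  destruct (Hs (eps/4)) as [N3 HN3]; [lra|].
  exists (N1 + N2 + N3)%nat. intros n Hn.
  destruct (rbar_small_inv _ _ (haus_nn _ _) (HN1 n ltac:(lia))) as [h [Eh Hh']].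
  destruct (rbar_small_inv _ _ (prok_nn _ _) (HN2 n ltac:(lia))) as [p [Ep Hp']].
  destruct (rbar_small_inv _ _ (sup_nn _ _) (HN3 n ltac:(lia))) as [s [Es Hs']].
  unfold ghpu_dist.
  match goal with |- context [Glb_Rbar ?E] => destruct (glb_fin E (h + p + s)) as [g [Eg Hg]] end.
  - exists W, (iN n), i. split; [auto|split; [auto|split; [auto|]]].
    rewrite Eh, Ep, Es. reflexivity.
  - apply ghpu_elem_nn.
  - rewrite Eg. simpl. rewrite Rabs_pos_eq; lra.
Qed.

Definition cross {Y Z : MetricSpace} (δ : Y -> Z -> R) : Prop :=
  (forall x x' y, δ x y <= dist x x' + δ x' y) /\
  (forall x y y', δ x y <= δ x y' + dist y' y) /\
  (forall x x' y, dist x x' <= δ x y + δ x' y) /\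
  (forall x y y', dist y y' <= δ x y + δ x y').

Definition Pgood (G X : GHPU) (δ : gspace G -> gspace X -> R) (e : R) : Prop :=
  (forall x, exists y, δ x y < e) /\ (forall y, exists x, δ x y < e) /\
  (forall t, δ (geta G t) (geta X t) < e) /\
  (forall A, borel A -> gmu G A <= gmu X (fun y => exists a, A a /\ δ a y < e) + e) /\
  (forall B, borel B -> gmu X B <= gmu G (fun x => exists b, B b /\ δ x b < e) + e).

Lemma open_delta2 {Y Z : MetricSpace} (δ : Y -> Z -> R) (A : Y -> Prop) e :
  (forall x y y', δ x y <= δ x y' + dist y' y) -> is_open (fun y => exists a, A a /\ δ a y < e).
Proof.
  intros H y [a [Ha Hd]]. exists (e - δ a y). split; [lra|]. intros y' Hy'.
  exists a; split; auto. pose proof (H a y' y). lra.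
Qed.

Lemma open_delta1 {Y Z : MetricSpace} (δ : Y -> Z -> R) (B : Z -> Prop) e :
  (forall x x' y, δ x y <= dist x x' + δ x' y) -> is_open (fun x => exists b, B b /\ δ x b < e).
Proof.
  intros H x [b [Hb Hd]]. exists (e - δ x b). split; [lra|]. intros x' Hx'.
  exists b; split; auto. pose proof (H x' x b). pose proof (dist_sym _ x x'). lra.
Qed.

Lemma iso_lip {X W : MetricSpace} (f : X -> W) : isometric_embedding f -> forall x y, dist (f x) (f y) <= dist x y.
Proof. intros H x y; rewrite H; lra. Qed.

Lemma cross_W {Y Z W : MetricSpace} (j : Y -> W) (i : Z -> W) :
  isometric_embedding j -> isometric_embedding i -> cross (fun x y => dist (j x) (i y)).
Proof.
  intros Hj Hi. split; [|split; [|split]].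
  - intros x x' y. rewrite <- Hj. apply dist_tri.
  - intros x y y'. rewrite <- Hi. apply dist_tri.
  - intros x x' y. rewrite <- Hj. rewrite (dist_sym _ (j x') (i y)). apply dist_tri.
  - intros x y y'. rewrite <- Hi. rewrite (dist_sym _ (j x) (i y)). apply dist_tri.
Qed.

Lemma P_mono G X δ e e' : cross δ -> Pgood G X δ e -> e <= e' -> Pgood G X δ e'.
Proof.
  intros (C1 & C2 & C3 & C4) (P1 & P2 & P3 & P4 & P5) Hle.
  split; [|split; [|split; [|split]]].
  - intros x; destruct (P1 x) as [y Hy]; exists y; lra.
  - intros y; destruct (P2 y) as [x Hx]; exists x; lra.
  - intros t; specialize (P3 t); lra.
  - intros A HA. specialize (P4 A HA).
    assert (gmu X (fun y => exists a, A a /\ δ a y < e) <= gmu X (fun y => exists a, A a /\ δ a y < e')).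
    { apply mu_mono; [apply gmu_meas | apply open_borel, open_delta2; auto | apply open_borel, open_delta2; auto |].
      intros y [a [Ha Hd]]; exists a; split; auto; lra. }
    lra.
  - intros B HB. specialize (P5 B HB).
    assert (gmu G (fun x => exists b, B b /\ δ x b < e) <= gmu G (fun x => exists b, B b /\ δ x b < e')).
    { apply mu_mono; [apply gmu_meas | apply open_borel, open_delta1; auto | apply open_borel, open_delta1; auto |].
      intros x [b [Hb Hd]]; exists b; split; auto; lra. }
    lra.
Qed.

Lemma P_shift G X δ e c : 0 <= c -> Pgood G X δ e -> Pgood G X (fun x y => δ x y + c) (e + c).
Proof.
  intros Hc (P1 & P2 & P3 & P4 & P5).
  split; [|split; [|split; [|split]]].
  - intros x; destruct (P1 x) as [y Hy]; exists y; lra.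
  - intros y; destruct (P2 y) as [x Hx]; exists x; lra.
  - intros t; specialize (P3 t); lra.
  - intros A HA. specialize (P4 A HA).
    replace (fun y => exists a, A a /\ δ a y + c < e + c) with (fun y => exists a, A a /\ δ a y < e).
    + lra.
    + apply pred_ext; intros y; split; intros [a [Ha Hd]]; exists a; split; auto; lra.
  - intros B HB. specialize (P5 B HB).
    replace (fun x => exists b, B b /\ δ x b + c < e + c) with (fun x => exists b, B b /\ δ x b < e).
    + lra.
    + apply pred_ext; intros y; split; intros [a [Ha Hd]]; exists a; split; auto; lra.
Qed.

Lemma from_W (G X : GHPU) (W : MetricSpace) (j : gspace G -> W) (i : gspace X -> W) r e :
  isometric_embedding j -> isometric_embedding i ->
  Rbar_plus (Rbar_plus (hausdorff_dist (image j) (image i))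
                       (prokhorov_dist (pushforward j (gmu G)) (pushforward i (gmu X))))
            (sup_curve_dist (fun t => j (geta G t)) (fun t => i (geta X t))) = Finite r ->
  r < e -> Pgood G X (fun x y => dist (j x) (i y)) e.
Proof.
  intros Hj Hi Hsum Hr.
  destruct (sum3 _ _ _ _ (haus_nn _ _) (prok_nn _ _) (sup_nn _ _) Hsum) as (h & p & s & Eh & Ep & Es & Hh & Hp & Hs & ->).
  destruct (cross_W j i Hj Hi) as (C1 & C2 & C3 & C4).
  destruct (glb_lt _ h e Eh ltac:(lra)) as [e1 [[He1 [Hha Hhb]] He1']].
  destruct (glb_lt _ p e Ep ltac:(lra)) as [e2 [[He2 Hpk] He2']].
  split; [|split; [|split; [|split]]].
  - intros x. destruct (Hha (j x) (ex_intro _ x eq_refl)) as [b [[y <-] Hd]]. exists y; lra.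
  - intros y. destruct (Hhb (i y) (ex_intro _ y eq_refl)) as [b [[x <-] Hd]]. exists x.
    rewrite dist_sym; lra.
  - intros t. assert (Rbar_le (Finite (dist (j (geta G t)) (i (geta X t)))) (Finite s)).
    { rewrite <- Es. apply lub_ge. exists t; auto. }
    simpl in H; lra.
  - intros A HA.
    set (B := nbhd (fun w => exists a, A a /\ j a = w) (e - e2)).
    assert (HB : borel B) by (apply open_borel, nbhd_open).
    destruct (Hpk B HB) as [Hk _]. unfold pushforward in Hk.
    assert (gmu G A <= gmu G (fun x => B (j x))).
    { apply mu_mono; [apply gmu_meas | auto | apply open_borel, preimage_open; [apply iso_lip; auto | apply nbhd_open] |].
      intros x Hx. exists (j x); split; [exists x; auto | rewrite dist_refl; lra]. }
    assert (gmu X (fun y => nbhd B e2 (i y)) <= gmu X (fun y => exists a, A a /\ dist (j a) (i y) < e)).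
    { apply mu_mono; [apply gmu_meas | apply open_borel, preimage_open; [apply iso_lip; auto | apply nbhd_open]
                     | apply open_borel, open_delta2; auto |].
      intros y [b [[w [[a [Ha <-]] Hd1]] Hd2]]. exists a; split; auto.
      pose proof (dist_tri _ (j a) b (i y)). pose proof (dist_sym _ b (j a)). pose proof (dist_sym _ (i y) b). lra. }
    lra.
  - intros A HA.
    set (B := nbhd (fun w => exists a, A a /\ i a = w) (e - e2)).
    assert (HB : borel B) by (apply open_borel, nbhd_open).
    destruct (Hpk B HB) as [_ Hk]. unfold pushforward in Hk.
    assert (gmu X A <= gmu X (fun x => B (i x))).
    { apply mu_mono; [apply gmu_meas | auto | apply open_borel, preimage_open; [apply iso_lip; auto | apply nbhd_open] |].
      intros x Hx. exists (i x); split; [exists x; auto | rewrite dist_refl; lra]. }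
    assert (gmu G (fun y => nbhd B e2 (j y)) <= gmu G (fun x => exists b, A b /\ dist (j x) (i b) < e)).
    { apply mu_mono; [apply gmu_meas | apply open_borel, preimage_open; [apply iso_lip; auto | apply nbhd_open]
                     | apply open_borel, open_delta1; auto |].
      intros y [b [[w [[a [Ha <-]] Hd1]] Hd2]]. exists a; split; auto.
      pose proof (dist_tri _ (i a) b (j y)). pose proof (dist_sym _ b (i a)). pose proof (dist_sym _ (j y) b).
      pose proof (dist_sym _ (j y) (i a)). lra. }
    lra.
Qed.

Lemma fallback (G X : GHPU) : cross (fun (x : gspace G) (y : gspace X) => dist x (geta G 0) + 1 + dist (geta X 0) y).
Proof.
  split; [|split; [|split]].
  - intros x x' y. pose proof (dist_tri _ x x' (geta G 0)). lra.
  - intros x y y'. pose proof (dist_tri _ (geta X 0) y' y). lra.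
  - intros x x' y. pose proof (dist_tri _ x (geta G 0) x'). pose proof (dist_sym _ (geta G 0) x').
    pose proof (dist_nonneg (geta X 0) y). lra.
  - intros x y y'. pose proof (dist_tri _ y (geta X 0) y'). pose proof (dist_sym _ y (geta X 0)).
    pose proof (dist_nonneg x (geta G 0)). lra.
Qed.

Lemma exists_delta (G X : GHPU) (n : nat) : exists δ : gspace G -> gspace X -> R,
  cross δ /\ (forall g, ghpu_dist G X = Finite g -> Pgood G X δ (g + / (INR n + 1))).
Proof.
  assert (Hn : 0 < / (INR n + 1)) by (apply Rinv_0_lt_compat; pose proof (pos_INR n); lra).
  destruct (ghpu_dist G X) as [g| |] eqn:E.
  - unfold ghpu_dist in E. destruct (glb_lt _ g (g + / (INR n + 1)) E ltac:(lra)) as [r [(W & j & i & _ & Hj & Hi & Hs) Hr]].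
    exists (fun x y => dist (j x) (i y)). split; [apply cross_W; auto|].
    intros g' Hg'. injection Hg'; intros <-. eapply from_W; eauto.
  - eexists; split; [apply fallback | intros g' Hg'; discriminate].
  - eexists; split; [apply fallback | intros g' Hg'; discriminate].
Qed.

Lemma inv_small eps : 0 < eps -> exists N, forall n, (N <= n)%nat -> / (INR n + 1) < eps.
Proof.
  intros He. destruct (archimed_cor1 eps He) as [N [HN HN0]]. exists N. intros n Hn.
  apply le_INR in Hn. assert (0 < INR N) by (apply lt_0_INR; lia).
  eapply Rle_lt_trans; [|exact HN]. apply Rinv_le_contravar; lra.
Qed.

Lemma forward (Xn : nat -> GHPU) (X : GHPU) :
  Rbar_cv0 (fun n => ghpu_dist (Xn n) X) ->
  exists (W : MetricSpace) (i : gspace X -> W) (iN : forall n, gspace (Xn n) -> W),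
    compact_space W /\ isometric_embedding i /\ (forall n, isometric_embedding (iN n)) /\
    Rbar_cv0 (fun n => hausdorff_dist (image (iN n)) (image i)) /\
    Rbar_cv0 (fun n => prokhorov_dist (pushforward (iN n) (gmu (Xn n))) (pushforward i (gmu X))) /\
    Rbar_cv0 (fun n => sup_curve_dist (fun t => iN n (geta (Xn n) t)) (fun t => i (geta X t))).
Proof.
  intros Hcv.
  pose (δs := fun n => proj1_sig (constructive_indefinite_description _ (exists_delta (Xn n) X n))).
  assert (Hδs : forall n, cross (δs n) /\ (forall g, ghpu_dist (Xn n) X = Finite g -> Pgood (Xn n) X (δs n) (g + / (INR n + 1))))
    by (intros n; exact (proj2_sig (constructive_indefinite_description _ (exists_delta (Xn n) X n)))).
  clearbody δs.
  pose (c := fun n : nat => / (INR n + 1)).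
  assert (Hc_pos : forall n, 0 < c n) by (intros n; unfold c; apply Rinv_0_lt_compat; pose proof (pos_INR n); lra).
  pose (δ' := fun n (x : gspace (Xn n)) (y : gspace X) => δs n x y + c n).
  assert (Hnn : forall n x y, 0 <= δs n x y).
  { intros n x y. destruct (Hδs n) as [(_ & _ & C3 & _) _]. specialize (C3 x x y). rewrite dist_refl in C3. lra. }
  assert (Hlow : forall n x y, c n <= δ' n x y) by (intros; unfold δ'; specialize (Hnn n x y); lra).
  assert (H1 : forall n x x' y, δ' n x y <= dist x x' + δ' n x' y).
  { intros n x x' y; unfold δ'. destruct (Hδs n) as [(C1 & _ & _ & _) _]. specialize (C1 x x' y). lra. }
  assert (H2 : forall n x y y', δ' n x y <= δ' n x y' + dist y' y).
  { intros n x y y'; unfold δ'. destruct (Hδs n) as [(_ & C2 & _ & _) _]. specialize (C2 x y y'). lra. }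
  assert (H3 : forall n x x' y, dist x x' <= δ' n x y + δ' n x' y).
  { intros n x x' y; unfold δ'. destruct (Hδs n) as [(_ & _ & C3 & _) _]. specialize (C3 x x' y). pose proof (Hc_pos n). lra. }
  assert (H4 : forall n x y y', dist y y' <= δ' n x y + δ' n x y').
  { intros n x y y'; unfold δ'. destruct (Hδs n) as [(_ & _ & _ & C4) _]. specialize (C4 x y y'). pose proof (Hc_pos n). lra. }
  assert (Hcr : forall n, cross (δ' n)) by (intros n; split; [apply H1|split; [apply H2|split; [apply H3|apply H4]]]).
  assert (Ev : forall eps, 0 < eps -> exists N, forall n, (N <= n)%nat -> Pgood (Xn n) X (δ' n) eps).
  { intros eps He. destruct (Hcv (eps / 3)) as [N1 HN1]; [lra|].
    destruct (inv_small (eps / 3)) as [N2 HN2]; [lra|].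
    exists (N1 + N2)%nat. intros n Hn.
    specialize (HN1 n ltac:(lia)). specialize (HN2 n ltac:(lia)).
    destruct (ghpu_dist (Xn n) X) as [g| |] eqn:E; simpl in HN1; try tauto.
    destruct (Hδs n) as [_ HP]. specialize (HP g E).
    apply P_shift with (c := c n) in HP; [| pose proof (Hc_pos n); lra].
    eapply P_mono; [apply Hcr | exact HP |].
    unfold c. pose proof (Rle_abs g). lra. }
  pose (W := Wm (fun n => gspace (Xn n)) (gspace X) (geta X 0) δ' c Hc_pos Hlow H1 H2 H3 H4).
  exists W, (fun y => inl y), (fun n x => inr (existT _ n x)).
  split; [|split; [|split; [|split; [|split]]]].
  - apply Wm_compact; [apply gcompact | intros; apply gcompact |].
    intros rho Hrho. destruct (Ev rho Hrho) as [N HN]. exists N. intros n Hn x.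
    destruct (HN n Hn) as [P1 _]. apply P1.
  - intros x y. reflexivity.
  - intros n x y. simpl. apply dd_same.
  - intros eps He. destruct (Ev (eps / 2)) as [N HN]; [lra|]. exists N. intros n Hn.
    destruct (HN n Hn) as (P1 & P2 & _).
    unfold hausdorff_dist.
    match goal with |- context [Glb_Rbar ?E] => destruct (glb_fin E (eps / 2)) as [g [Eg Hg]] end.
    + split; [lra|split].
      * intros a [x <-]. destruct (P1 x) as [y Hy]. exists (inl y). split; [exists y; auto | exact Hy].
      * intros b [y <-]. destruct (P2 y) as [x Hx]. exists (inr (existT _ n x)). split; [exists x; auto | exact Hx].
    + intros e [He' _]; lra.
    + rewrite Eg. simpl. rewrite Rabs_pos_eq; lra.
  - intros eps He. destruct (Ev (eps / 2)) as [N HN]; [lra|]. exists N. intros n Hn.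
    destruct (HN n Hn) as (_ & _ & _ & P4 & P5).
    unfold prokhorov_dist.
    match goal with |- context [Glb_Rbar ?E] => destruct (glb_fin E (eps / 2)) as [g [Eg Hg]] end.
    + split; [lra|]. intros A HA. unfold pushforward. split.
      * assert (HAn : borel (fun x : gspace (Xn n) => A (inr (existT _ n x)))).
        { apply (preimage_borel (W := W)); auto. intros x y; simpl; rewrite dd_same; lra. }
        specialize (P4 _ HAn).
        assert (gmu X (fun y => exists a, A (inr (existT _ n a)) /\ δ' n a y < eps / 2) <=
                gmu X (fun y => nbhd A (eps / 2) (inl y))).
        { apply mu_mono; [apply gmu_meas | apply open_borel, open_delta2; apply H2 |
            apply open_borel, (preimage_open (W := W)); [intros x y; simpl; lra | apply nbhd_open] |].
          intros y [a [Ha Hd]]. exists (inr (existT _ n a)). split; auto. }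
        lra.
      * assert (HAn : borel (fun y : gspace X => A (inl y))).
        { apply (preimage_borel (W := W)); auto. intros x y; simpl; lra. }
        specialize (P5 _ HAn).
        assert (gmu (Xn n) (fun x => exists b, A (inl b) /\ δ' n x b < eps / 2) <=
                gmu (Xn n) (fun x => nbhd A (eps / 2) (inr (existT _ n x)))).
        { apply mu_mono; [apply gmu_meas | apply open_borel, open_delta1; apply H1 |
            apply open_borel, (preimage_open (W := W)); [intros x y; simpl; rewrite dd_same; lra | apply nbhd_open] |].
          intros x [b [Hb Hd]]. exists (inl b). split; auto. }
        lra.
    + intros e [He' _]; lra.
    + rewrite Eg. simpl. rewrite Rabs_pos_eq; lra.
  - intros eps He. destruct (Ev (eps / 2)) as [N HN]; [lra|]. exists N. intros n Hn.
    destruct (HN n Hn) as (_ & _ & P3 & _).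
    apply (rbar_small _ (eps / 2)); [apply sup_nn | | lra].
    apply lub_le. intros r [t ->]. simpl. specialize (P3 t). lra.
Qed.

Theorem proposition1p5 (Xn : nat -> GHPU) (X : GHPU) :
  Rbar_cv0 (fun n => ghpu_dist (Xn n) X) <->
  exists (W : MetricSpace) (i : gspace X -> W) (iN : forall n, gspace (Xn n) -> W),
    compact_space W /\ isometric_embedding i /\ (forall n, isometric_embedding (iN n)) /\
    Rbar_cv0 (fun n => hausdorff_dist (image (iN n)) (image i)) /\
    Rbar_cv0 (fun n => prokhorov_dist (pushforward (iN n) (gmu (Xn n))) (pushforward i (gmu X))) /\
    Rbar_cv0 (fun n => sup_curve_dist (fun t => iN n (geta (Xn n) t)) (fun t => i (geta X t))).
Proof.
  split; [apply forward | apply backward].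
Qed.
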